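(* Let $\mathcal{P}$ be a hereditary property of ordered graphs, and let $k,M \geqslant 0$ be integers. Suppose that for every $G \in \mathcal{P}$, the homogeneous block sequence $t_1\geqslant t_2\geqslant\dots$ of $G$ satisfies $\sum_{i = k+2}^\infty t_i \leqslant M$. Then $|\mathcal{P}_n| = O(n^k)$ as $n\to\infty$.
   Context: Ordered graphs of order $n$ have vertex set $[n]$ with the natural order; a hereditary property is a collection of ordered graphs closed under order-preserving isomorphism and induced ordered subgraphs; $\mathcal{P}_n$ is the set of members with vertex set $[n]$. A homogeneous block of $G$ is a maximal set $B$ of consecutive vertices such that $\Gamma(x)\setminus\{y\}=\Gamma(y)\setminus\{x\}$ for all $x,y\in B$ ($\Gamma$ denoting neighbourhood); these partition $V(G)$ uniquely. The homogeneous block sequence of $G$ is $t_1\geqslant t_2\geqslant\dots$, the orders of the homogeneous blocks of $G$ in non-increasing order, with $t_i=0$ for $i$ larger than the number of blocks. *)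

(* Defs.v *)
From mathcomp Require Import all_boot.
Set Implicit Arguments. Unset Strict Implicit. Unset Printing Implicit Defensive.

(* An ordered graph of order n: vertex set 'I_n = {0,...,n-1} (the natural order),
   edges are 2-element subsets of 'I_n. *)
Definition ograph (n : nat) := {set {set 'I_n}}.

Definition is_ograph n (E : ograph n) : bool := [forall e in E, #|e| == 2].

Definition adj n (E : ograph n) (x y : 'I_n) : bool := [set x; y] \in E.

Definition nbhd n (E : ograph n) (x : 'I_n) : {set 'I_n} := [set y | adj E x y].

Definition twins n (E : ograph n) (x y : 'I_n) : bool :=
  nbhd E x :\ y == nbhd E y :\ x.

Definition consecutive n (B : {set 'I_n}) : bool :=
  [forall x in B, forall z in B, forall y : 'I_n,
     ((x <= y)%N && (y <= z)%N) ==> (y \in B)].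

Definition twin_set n (E : ograph n) (B : {set 'I_n}) : bool :=
  consecutive B && [forall x in B, forall y in B, twins E x y].

Definition homogeneous_block n (E : ograph n) (B : {set 'I_n}) : bool :=
  twin_set E B && [forall B' : {set 'I_n}, (twin_set E B' && (B \subset B')) ==> (B' == B)].

Definition blocks n (E : ograph n) : {set {set 'I_n}} := [set B | homogeneous_block E B].

(* homogeneous block sequence t_1 >= t_2 >= ... (finitely many nonzero terms) *)
Definition block_seq n (E : ograph n) : seq nat :=
  sort geq [seq #|(B : {set 'I_n})| | B in blocks E].

Definition induced m n (E : ograph n) (f : 'I_m -> 'I_n) : ograph m :=
  [set e : {set 'I_m} | (#|e| == 2) && (f @: e \in E)].

Definition hereditary (P : forall n, pred (ograph n)) : Prop :=
  forall m n (f : 'I_m -> 'I_n),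
    (forall x y : 'I_m, (x < y)%N -> (f x < f y)%N) ->
    forall E : ograph n, is_ograph E -> P n E -> P m (induced E f).

Definition Pn (P : forall n, pred (ograph n)) (n : nat) : {set ograph n} :=
  [set E : ograph n | is_ograph E && P n E].

(* Main.v *)
Require Import Defs.
From mathcomp Require Import all_boot.
From mathcomp Require Import zify.
Set Implicit Arguments. Unset Strict Implicit. Unset Printing Implicit Defensive.


Lemma adj_sym n (E : ograph n) x y : adj E x y = adj E y x.
Proof. by rewrite /adj setUC. Qed.

Lemma adj_irr n (E : ograph n) x : is_ograph E -> adj E x x = false.
Proof.
move=> /forall_inP HE; apply/negbTE/negP => H.
by have := HE _ H; rewrite setUid cards1.
Qed.

Lemma twP n (E : ograph n) x y z :
  twins E x y -> z != x -> z != y -> adj E x z = adj E y z.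
Proof.
move=> /eqP/setP/(_ z); rewrite /nbhd !inE => H zx zy.
by move: H; rewrite zx zy.
Qed.

Lemma twins_refl n (E : ograph n) x : twins E x x.
Proof. by rewrite /twins. Qed.

Lemma twins_sym n (E : ograph n) x y : twins E x y = twins E y x.
Proof. by rewrite /twins eq_sym. Qed.

Lemma twins_trans n (E : ograph n) x y z : is_ograph E ->
  twins E x y -> twins E y z -> twins E x z.
Proof.
move=> HE txy tyz.
have [->|xy] := eqVneq x y; first by [].
have [<-|yz] := eqVneq y z; first by [].
have [<-|xz] := eqVneq x z; first exact: twins_refl.
apply/eqP/setP => w; rewrite /nbhd !inE.
have [->|wx] := eqVneq w x; first by rewrite adj_irr // andbF.
have [->|wz] := eqVneq w z; first by rewrite adj_irr // andbF.
rewrite /=.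
have [->|wy] := eqVneq w y.
  have e1 : adj E y x = adj E z x by apply: twP; rewrite // eq_sym.
  have e2 : adj E x z = adj E y z by apply: twP; rewrite // eq_sym.
  by rewrite adj_sym e1 adj_sym e2 adj_sym.
by rewrite (twP txy) // (twP tyz).
Qed.

Lemma twin_class_adj n (E : ograph n) x y a b : is_ograph E ->
  twins E x y -> twins E x a -> twins E x b -> twins E y a -> twins E y b -> twins E a b ->
  x != y -> a != b -> adj E x y = adj E a b.
Proof.
move=> HE txy txa txb tya tyb tab xy ab.
have [ay|ay] := eqVneq a y.
  subst a.
  have [bx|bx] := eqVneq b x; first by subst b; rewrite adj_sym.
  have e1 : adj E x y = adj E b y by apply: twP; rewrite // eq_sym.
  by rewrite e1 adj_sym.
have e1 : adj E x y = adj E a y by apply: twP; rewrite // eq_sym.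
have e2 : adj E y a = adj E b a by apply: twP; rewrite // eq_sym.
by rewrite e1 adj_sym e2 adj_sym.
Qed.

Definition Sb n (E : ograph n.+1) : {set 'I_n.+1} :=
  [set x : 'I_n.+1 | [forall y : 'I_n.+1, (y.+1 == x :> nat) ==> ~~ twins E y x]].

Definition sameI n (S : {set 'I_n}) (x y : 'I_n) : bool :=
  [forall s in S, ~~ ((minn x y < s) && (s <= maxn x y))].

Lemma sameIP n (S : {set 'I_n}) (x y : 'I_n) :
  reflect (forall s, s \in S -> ~~ ((minn x y < s) && (s <= maxn x y))) (sameI S x y).
Proof. exact: forall_inP. Qed.

Lemma sameI_refl n (S : {set 'I_n}) (x : 'I_n) : sameI S x x.
Proof. apply/sameIP => s _; apply/negP => /andP[]; lia. Qed.

Lemma sameI_sym n (S : {set 'I_n}) (x y : 'I_n) : sameI S x y = sameI S y x.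
Proof. by rewrite /sameI minnC maxnC. Qed.

Lemma sameI_trans n (S : {set 'I_n}) (x y z : 'I_n) :
  sameI S x y -> sameI S y z -> sameI S x z.
Proof.
move=> /sameIP H1 /sameIP H2; apply/sameIP => s sS.
have := H1 s sS; have := H2 s sS; move=> /negP A /negP B; apply/negP => C.
apply: A; apply/andP; move/andP: C => [C1 C2].
have : ~ ((minn x y < s) && (s <= maxn x y)) by [].
move=> D. 
case: (ltnP (minn y z) s) => h1; case: (leqP s (maxn y z)) => h2 //.
- exfalso; apply: D; apply/andP; lia.
- exfalso; apply: D; apply/andP; lia.
- exfalso; apply: D; apply/andP; lia.
Qed.

Lemma sameI_nS n (S : {set 'I_n}) (a b s : 'I_n) :
  sameI S a b -> s \in S -> a < s -> s <= b -> False.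
Proof.
move=> /sameIP H sS h1 h2; have := H s sS; apply/negP/negPn/andP; lia.
Qed.

Lemma sameI_between n (S : {set 'I_n}) (x y z : 'I_n) :
  sameI S x z -> x <= y -> y <= z -> sameI S x y.
Proof.
move=> /sameIP H h1 h2; apply/sameIP => s sS; apply/negP => /andP [c1 c2].
have := H s sS; apply/negP/negPn/andP; lia.
Qed.

Lemma chain n (E : ograph n.+1) x y : is_ograph E ->
  sameI (Sb E) x y -> twins E x y.
Proof.
move=> HE.
wlog xy : x y / x <= y.
  move=> W; case: (leqP x y) => h; first exact: W.
  rewrite sameI_sym twins_sym; apply: W; exact: ltnW.
move=> sI.
have [d hd] : exists d, (y : nat) = x + d by exists (y - x); lia.
elim: d y hd xy sI => [|d IH] y hd xy sI.
  have -> : y = x by apply: ord_inj; rewrite hd addn0.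
  exact: twins_refl.
have yb := ltn_ord y.
pose y' : 'I_n.+1 := inord (x + d).
have vy' : (y' : nat) = x + d by rewrite /y' inordK //; lia.
have t1 : twins E x y'.
  apply: IH => //; first lia.
  apply: sameI_between sI _ _; lia.
have ynS : y \notin Sb E.
  apply/negP => yS; apply: (sameI_nS sI yS); lia.
move: ynS; rewrite inE negb_forall => /existsP [z].
rewrite negb_imply negbK => /andP [/eqP hz tz].
have yz : y' = z by apply: ord_inj; lia.
rewrite yz in t1; exact: twins_trans HE t1 tz.
Qed.

Lemma Sb0 n (E : ograph n.+1) : ord0 \in Sb E.
Proof. by rewrite inE; apply/forallP => y. Qed.

Definition rS n (S : {set 'I_n.+1}) (x : 'I_n.+1) : 'I_n.+1 :=
  odflt x [pick s in S | (s <= x) && sameI S s x].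

Lemma rS_ex n (S : {set 'I_n.+1}) (x : 'I_n.+1) : ord0 \in S ->
  exists2 s, s \in S & (s <= x) && sameI S s x.
Proof.
move=> S0.
have [m hm] : exists m, (x : nat) = m by exists x.
elim: m x hm => [|m IH] x hm.
  have -> : x = ord0 by apply: ord_inj.
  by exists ord0 => //; rewrite leqnn sameI_refl.
case xS: (x \in S); first by exists x => //; rewrite leqnn sameI_refl.
have xb := ltn_ord x.
pose x' : 'I_n.+1 := inord m.
have vx' : (x' : nat) = m by rewrite /x' inordK //; lia.
have [s sS /andP [h1 h2]] := IH x' vx'.
exists s => //; apply/andP; split; first lia.
apply/sameIP => t tS; apply/negP => /andP [c1 c2].
have tx : t != x by apply/negP => /eqP tx; rewrite -tx tS in xS.
have tx' : (t : nat) != x by [].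
move/sameIP: h2 => /(_ t tS) /negP; apply; apply/andP; lia.
Qed.

Lemma rS_spec n (S : {set 'I_n.+1}) (x : 'I_n.+1) : ord0 \in S ->
  [/\ rS S x \in S, rS S x <= x & sameI S (rS S x) x].
Proof.
move=> S0; rewrite /rS; case: pickP => [s /andP [sS /andP [h1 h2]]|H] /=.
  by split.
have [s sS hs] := rS_ex x S0.
by have := H s; rewrite sS hs.
Qed.

Definition rep2 n (S : {set 'I_n.+1}) (x y : 'I_n.+1) : {set 'I_n.+1} :=
  if sameI S x y then [set rS S x; inord (rS S x).+1] else [set rS S x; rS S y].

Definition Kset n (S : {set 'I_n.+1}) : {set 'I_n.+1} :=
  S :|: [set (inord (nat_of_ord s).+1 : 'I_n.+1) | s : 'I_n.+1 in S].

Lemma rep2_sub n (S : {set 'I_n.+1}) x y : ord0 \in S -> rep2 S x y \subset Kset S.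
Proof.
move=> S0; have [rx _ _] := rS_spec x S0; have [ry _ _] := rS_spec y S0.
rewrite /rep2; case: ifP => _; apply/subsetP => z; rewrite !inE => /orP [] /eqP ->.
- by rewrite rx.
- by apply/orP; right; apply/imsetP; exists (rS S x).
- by rewrite rx.
- by rewrite ry.
Qed.

Lemma rep2_adj n (E : ograph n.+1) x y : is_ograph E -> x != y ->
  adj E x y = (rep2 (Sb E) x y \in E).
Proof.
move=> HE xy; set S := Sb E.
have S0 : ord0 \in S := Sb0 E.
have [ra rax sax] := rS_spec x S0.
rewrite /rep2; case: ifP => sxy.
  move: (rS S x) ra rax sax => a ra rax sax.
  have xyn : (x : nat) != y by [].
  have yb := ltn_ord y; have xb := ltn_ord x.
  pose b : 'I_n.+1 := inord a.+1.
  have ay : a <= y.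
    case: (leqP a y) => // h; exfalso.
    by apply: (sameI_nS (_ : sameI S y x) ra h rax); rewrite sameI_sym.
  have vb : (b : nat) = a.+1.
 rewrite /b inordK //. lia.
  have ab : a != b by apply/negP => /eqP/(congr1 (@nat_of_ord _)); rewrite vb; lia.
  have say : sameI S a y := sameI_trans sax sxy.
  have sab : sameI S a b.
    apply/sameIP => t tS; apply/negP => /andP [c1 c2].
    move/sameIP: sax => /(_ t tS) /negP A; move/sameIP: say => /(_ t tS) /negP B.
    have : (t : nat) <= maxn x y by lia.
    case: (leqP x y) => h.
      by move=> h2; apply: B; apply/andP; lia.
    by move=> h2; apply: A; apply/andP; lia.
  have T u v : sameI S u v -> twins E u v := fun h => chain HE h.
  apply: twin_class_adj => //; apply: T.
  - by [].
  - by rewrite sameI_sym.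
  - by apply: (sameI_trans _ sab); rewrite sameI_sym.
  - by rewrite sameI_sym.
  - by apply: (sameI_trans _ sab); rewrite sameI_sym.
  - by [].
have [rb rby sby] := rS_spec y S0.
move: (rS S x) (rS S y) ra rax sax rb rby sby => a c ra rax sax rb rby sby.
have txa : twins E x a by apply: chain => //; rewrite sameI_sym.
have tyc : twins E y c by apply: chain => //; rewrite sameI_sym.
have ya : y != a.
  apply/negP => /eqP ya; move: sax; rewrite -ya sameI_sym sxy; done.
have ac : a != c.
  apply/negP => /eqP ac; move: sby; rewrite -ac => say.
  have sxa : sameI S x a by rewrite sameI_sym.
  by have := sameI_trans sxa say; rewrite sxy.
have e1 : adj E x y = adj E a y by apply: twP; rewrite // eq_sym.
have e2 : adj E y a = adj E c a by apply: twP; rewrite // eq_sym.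
by rewrite e1 adj_sym e2 adj_sym.
Qed.

Lemma E_sub n (E1 E2 : ograph n.+1) : is_ograph E1 -> is_ograph E2 -> Sb E1 = Sb E2 ->
  E1 :&: powerset (Kset (Sb E1)) = E2 :&: powerset (Kset (Sb E2)) -> E1 \subset E2.
Proof.
move=> H1 H2 eS eK; apply/subsetP => e eE1.
have := H1; move/forall_inP/(_ e eE1) => /cards2P [x [y [xy ee]]]; subst e.
have h : rep2 (Sb E1) x y \in E1.
  by rewrite -(rep2_adj H1 xy).
change (adj E2 x y); rewrite (rep2_adj H2 xy) -eS.
have sub := rep2_sub x y (Sb0 E1).
have : rep2 (Sb E1) x y \in E1 :&: powerset (Kset (Sb E1)) by rewrite inE h powersetE sub.
by rewrite eK inE => /andP [].
Qed.

Lemma E_inj n (E1 E2 : ograph n.+1) : is_ograph E1 -> is_ograph E2 -> Sb E1 = Sb E2 ->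
  E1 :&: powerset (Kset (Sb E1)) = E2 :&: powerset (Kset (Sb E2)) -> E1 = E2.
Proof.
move=> H1 H2 eS eK; apply/eqP; rewrite eqEsubset; apply/andP; split.
  exact: E_sub.
by apply: E_sub => //.
Qed.

Definition Iv n (S : {set 'I_n}) (v : 'I_n) : {set 'I_n} := [set y | sameI S v y].

Lemma consecP n (B : {set 'I_n}) (a b c : 'I_n) : consecutive B -> a \in B -> b \in B ->
  a <= c -> c <= b -> c \in B.
Proof.
move=> /forall_inP /(_ a) H aB bB h1 h2.
by move: (H aB) => /forall_inP /(_ b bB) /forallP /(_ c) /implyP; apply; rewrite h1 h2.
Qed.

Lemma twsetP n (E : ograph n) B x y : twin_set E B -> x \in B -> y \in B -> twins E x y.
Proof.
move=> /andP [_ /forall_inP H] xB yB.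
by move: (H x xB) => /forall_inP /(_ y yB).
Qed.

Lemma Iv_block n (E : ograph n.+1) v : is_ograph E -> homogeneous_block E (Iv (Sb E) v).
Proof.
move=> HE; set S := Sb E.
have tws : twin_set E (Iv S v).
  apply/andP; split.
    apply/forall_inP => x; rewrite inE => vx; apply/forall_inP => z; rewrite inE => vz.
    apply/forallP => y; apply/implyP => /andP [h1 h2]; rewrite inE.
    have sxz : sameI S x z by apply: sameI_trans vz; rewrite sameI_sym.
    exact: sameI_trans vx (sameI_between sxz h1 h2).
  apply/forall_inP => x; rewrite inE => vx; apply/forall_inP => y; rewrite inE => vy.
  by apply: chain => //; apply: sameI_trans vy; rewrite sameI_sym.
rewrite /homogeneous_block tws /=.
apply/forallP => B'; apply/implyP => /andP [tB' sub].
rewrite eqEsubset sub andbT.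
have vB' : v \in B' by apply: (subsetP sub); rewrite inE sameI_refl.
apply/subsetP => y yB'; rewrite inE.
apply/negPn/negP; rewrite negb_forall_in => /existsP [s /andP [sS /negPn /andP [c1 c2]]].
have cB' := (andP tB').1.
have sB' : s \in B'.
  case: (leqP v y) => h.
    by apply: (consecP cB' vB' yB'); lia.
  by apply: (consecP cB' yB' vB'); lia.
have sb := ltn_ord s.
pose p : 'I_n.+1 := inord s.-1.
have vp : (p : nat) = s.-1 by rewrite /p inordK //; lia.
have pB' : p \in B'.
  case: (leqP v y) => h.
    by apply: (consecP cB' vB' sB'); lia.
  by apply: (consecP cB' yB' sB'); lia.
have tps := twsetP tB' pB' sB'.
have e : (p.+1 == s :> nat) by apply/eqP; lia.
by move: sS; rewrite inE => /forallP /(_ p) /implyP /(_ e); rewrite tps.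
Qed.


Lemma seq_h1 M (l : seq nat) : sumn (map (fun c => nat_of_bool (M < c)) l) <= size l.
Proof. elim: l => //= c l IH; case: (M < c) => /=; lia. Qed.

Lemma seq_h2 M (l : seq nat) : M.+1 * sumn (map (fun c => nat_of_bool (M < c)) l) <= sumn l.
Proof. elim: l => [|c l IH] /=; first by rewrite muln0. case: (ltnP M c) => /= h; lia. Qed.

Lemma seq_g1 M (l : seq nat) : sumn (map (fun c => if c <= M then c else 0) l) <= size l * M.
Proof. elim: l => //= c l IH; case: (leqP c M) => /= h; lia. Qed.

Lemma seq_g2 M (l : seq nat) : sumn (map (fun c => if c <= M then c else 0) l) <= sumn l.
Proof. elim: l => //= c l IH; case: (leqP c M) => /= h; lia. Qed.

Lemma seq_P1 k M (s : seq nat) : sumn (drop k.+1 s) <= M ->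
  sumn (map (fun c => nat_of_bool (M < c)) s) <= k.+1.
Proof.
move=> H; rewrite -(cat_take_drop k.+1 s) map_cat sumn_cat.
have := seq_h1 M (take k.+1 s); have := seq_h2 M (drop k.+1 s).
rewrite size_take_min; nia.
Qed.

Lemma seq_P2 k M (s : seq nat) : sumn (drop k.+1 s) <= M ->
  sumn (map (fun c => if c <= M then c else 0) s) <= k.+2 * M.
Proof.
move=> H; rewrite -(cat_take_drop k.+1 s) map_cat sumn_cat.
have := seq_g1 M (take k.+1 s); have := seq_g2 M (drop k.+1 s).
rewrite size_take_min; nia.
Qed.

Lemma bs_sum n (E : ograph n) (f : nat -> nat) :
  sumn (map f (block_seq E)) = \sum_(B in blocks E) f #|B|.
Proof.
rewrite /block_seq (perm_sumn (perm_map f (permEl (perm_sort _ _)))).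
by rewrite sumnE big_map big_map big_enum.
Qed.

Lemma P1 n (E : ograph n) k M : sumn (drop k.+1 (block_seq E)) <= M ->
  #|[set B in blocks E | M < #|B|]| <= k.+1.
Proof.
move=> /(seq_P1 (M:=M)); rewrite bs_sum.
rewrite -sum1_card => H; apply: leq_trans H; rewrite [X in X <= _]big_mkcond [X in _ <= X]big_mkcond /=; apply: eq_leq; apply: eq_bigr => B _; rewrite inE; by case: (B \in blocks E); case: (M < #|B|).
Qed.

Lemma P2 n (E : ograph n) k M : sumn (drop k.+1 (block_seq E)) <= M ->
  \sum_(B in blocks E | #|B| <= M) #|B| <= k.+2 * M.
Proof.
move=> /(seq_P2 (M:=M)); rewrite bs_sum.
by rewrite big_mkcondr.
Qed.

Lemma card_bigcup_le (I T : finType) (P : pred I) (F : I -> {set T}) :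
  #|\bigcup_(i | P i) F i| <= \sum_(i | P i) #|F i|.
Proof.
apply: (big_ind2 (fun (X : {set T}) m => #|X| <= m)) => //.
  by rewrite cards0.
move=> X1 m1 X2 m2 h1 h2; rewrite cardsU.
apply: leq_trans (leq_subr _ _) _; exact: leq_add.
Qed.

Lemma card_range N (A : {set 'I_N}) a L :
  (forall x, x \in A -> a <= x < a + L) -> #|A| <= L.
Proof.
move=> H; rewrite cardE -(size_map (@nat_of_ord N)) -(size_iota a L).
apply: uniq_leq_size.
  rewrite map_inj_uniq ?enum_uniq //; exact: ord_inj.
move=> i /mapP [x]; rewrite mem_enum => /H h ->; rewrite mem_iota; lia.
Qed.

Lemma card_range_ge N (A : {set 'I_N.+1}) a b : b <= N ->
  (forall i, a <= i <= b -> (inord i : 'I_N.+1) \in A) -> b.+1 - a <= #|A|.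
Proof.
move=> bN H.
have -> : b.+1 - a = size [seq (inord i : 'I_N.+1) | i <- iota a (b.+1 - a)] by rewrite size_map size_iota.
rewrite cardE; apply: uniq_leq_size.
  rewrite map_inj_in_uniq ?iota_uniq //.
  move=> i j; rewrite !mem_iota => hi hj /(congr1 (@nat_of_ord _)).
  rewrite !inordK //; lia.
move=> x /mapP [i]; rewrite mem_iota mem_enum => hi ->; apply: H; lia.
Qed.

Lemma card_small_sets N k :
  #|[set A : {set 'I_N} | #|A| <= k]| <= N.+1 ^ k.
Proof.
pose f (g : {ffun 'I_k -> option 'I_N}) : {set 'I_N} := [set x | Some x \in codom g].
have -> : N.+1 = #|{: option 'I_N}| by rewrite card_option card_ord.
rewrite -(card_ord k) -card_ffun.
apply: leq_trans (_ : #|f @: [set: {ffun 'I_k -> option 'I_N}]| <= _); last first.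
  by apply: leq_trans (leq_imset_card _ _) _; rewrite cardsT.
apply: subset_leq_card; apply/subsetP => A; rewrite inE => hA.
apply/imsetP.
exists [ffun i : 'I_k => nth None (map Some (enum A)) i] => //.
apply/setP => x; rewrite inE.
apply/idP/idP => [xA|].
  apply/codomP.
  have hi : index x (enum A) < k.
    move: hA; rewrite card_ord => hA; apply: leq_trans _ hA.
    by rewrite cardE index_mem mem_enum.
  exists (Ordinal hi); rewrite ffunE /=.
  rewrite (nth_map x); last by rewrite index_mem mem_enum.
  by rewrite nth_index // mem_enum.
move=> /codomP [i]; rewrite ffunE => h.
case: (ltnP i (size (map Some (enum A)))) => hi.
  rewrite size_map in hi.
  move: h; rewrite (nth_map x) // => [[hx]].
  by rewrite -mem_enum {1}hx mem_nth.
by move: h; rewrite nth_default.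
Qed.

Definition anch n (S : {set 'I_n.+1}) R (s : 'I_n.+1) : bool :=
  (s <= R) || (n.+1 <= s + R) || [exists s' in S, (s' < s) && (s <= s' + R)].
Definition nonan n (S : {set 'I_n.+1}) R := [set s in S | ~~ anch S R s].
Definition Wset n (A : {set 'I_n.+1}) R2 : {set 'I_n.+1} :=
  [set x : 'I_n.+1 | (x <= R2) || (n.+1 <= x + R2) || [exists y in A, (y <= x) && (x <= y + R2)]].

Lemma leq_cardsU (T : finType) (A B : {set T}) : #|A :|: B| <= #|A| + #|B|.
Proof. by rewrite cardsU leq_subr. Qed.

Lemma Wset_mono n (A : {set 'I_n.+1}) R R' : R <= R' -> Wset A R \subset Wset A R'.
Proof.
move=> h; apply/subsetP => x; rewrite !inE => /orP [/orP [h1|h1]|/exists_inP [y yA /andP [h1 h2]]].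
- by rewrite (_ : x <= R' = true) //; lia.
- by rewrite (_ : n.+1 <= x + R' = true) ?orbT //; lia.
- by apply/orP; right; apply/exists_inP; exists y => //; apply/andP; lia.
Qed.

Lemma anchor_chain n (S : {set 'I_n.+1}) R : S \subset Wset (nonan S R) (R * #|S|).
Proof.
have claim : forall m (s : 'I_n.+1), s \in S -> (s : nat) = m ->
  (n.+1 <= s + R) \/ exists y : nat, ((y = 0) \/ exists2 a, a \in nonan S R & (a : nat) = y)
     /\ y <= s /\ s - y <= R * #|[set z in S | (y < z) && (z <= s)]|.
  elim/ltn_ind => m IH s sS sm.
  case sA : (s \in nonan S R).
    right; exists s; split; first by right; exists s.
    by split => //; rewrite subnn.
  move: sA; rewrite inE sS /= => /negbFE; rewrite /anch => /orP [/orP [h|h]|/exists_inP [s' s'S /andP [h1 h2]]].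
  - right; exists 0; split; first by left.
    split => //; case: (posnP s) => s0; first by rewrite s0.
    have : 1 <= #|[set z in S | (0 < z) && (z <= s)]|.
      by rewrite card_gt0; apply/set0Pn; exists s; rewrite inE sS s0 leqnn.
    move=> hc; rewrite subn0; apply: leq_trans h _; by rewrite -{1}(muln1 R) leq_mul2l hc orbT.
  - by left.
  - have := IH s' (_ : s' < m) s' s'S erefl; case; first by lia.
    + by move=> h; left; lia.
    move=> [y [hy [h3 h4]]]; right; exists y; split => //; split; first lia.
    have hc : #|[set z in S | (y < z) && (z <= s')]|.+1 <= #|[set z in S | (y < z) && (z <= s)]|.
      rewrite -add1n.
      have sn : s \notin [set z in S | (y < z) && (z <= s')] by rewrite inE; apply/negP => /andP [_ /andP [_]]; lia.
      rewrite -(_ : #|s |: [set z in S | (y < z) && (z <= s')]| = 1 + _); last by rewrite cardsU1 sn.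
      apply: subset_leq_card; apply/subsetP => z; rewrite !inE => /orP [/eqP ->|/andP [zS /andP [c1 c2]]].
        by rewrite sS /=; apply/andP; lia.
      by rewrite zS /=; apply/andP; lia.
    have := leq_mul2l R (#|[set z in S | (y < z) && (z <= s')]|.+1) (#|[set z in S | (y < z) && (z <= s)]|); rewrite hc orbT mulnS => hm; move: (#|[set z in S | (y < z) && (z <= s')]|) (#|[set z in S | (y < z) && (z <= s)]|) hm h4 => c1 c2 hm h4; clear hc hy IH; lia.
apply/subsetP => s sS.
have cS : 0 < #|S| by rewrite card_gt0; apply/set0Pn; exists s.
have bnd y : #|[set z in S | (y < z) && (z <= s)]| <= #|S|.
  by apply: subset_leq_card; apply/subsetP => z; rewrite inE => /andP [].
rewrite inE; case: (claim s s sS erefl) => [h|[y [[->|[a aA ay]] [h1 h2]]]].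
- have hR : R <= R * #|S| by rewrite -{1}(muln1 R) leq_mul2l cS orbT.
  move: (R * #|S|) hR => c hR.
  by rewrite (_ : n.+1 <= s + c = true) ?orbT //; lia.
- have hb := bnd 0; have := leq_mul2l R (#|[set z in S | (0 < z) && (z <= s)]|) #|S|.
  rewrite hb orbT => hm.
  move: (R * #|S|) (R * #|[set z in S | (0 < z) && (z <= s)]|) hm h2 => c1 c2 hm h2.
  by rewrite (_ : s <= c1 = true) //; lia.
- apply/orP; right; apply/exists_inP; exists a => //; apply/andP; split; first lia.
  have hb := bnd y; have := leq_mul2l R (#|[set z in S | (y < z) && (z <= s)]|) #|S|.
  rewrite hb orbT => hm.
  move: (R * #|S|) (R * #|[set z in S | (y < z) && (z <= s)]|) hm h2 => c1 c2 hm h2.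
  lia.
Qed.

Lemma Wset_card n (A : {set 'I_n.+1}) R2 : #|Wset A R2| <= R2.+1 + R2 + #|A| * R2.+1.
Proof.
have sub : Wset A R2 \subset ([set x : 'I_n.+1 | x <= R2] :|: [set x : 'I_n.+1 | n.+1 <= x + R2])
   :|: \bigcup_(y in A) [set x : 'I_n.+1 | (y <= x) && (x <= y + R2)].
  apply/subsetP => x; rewrite !inE => /orP [/orP [h|h]|/exists_inP [y yA h]].
  - by rewrite h.
  - by rewrite h orbT.
  - by apply/orP; right; apply/bigcupP; exists y => //; rewrite inE.
apply: leq_trans (subset_leq_card sub) _.
apply: leq_trans (leq_cardsU _ _) _; apply: leq_add.
  apply: leq_trans (leq_cardsU _ _) _; apply: leq_add.
    by apply: (card_range (a := 0)) => x; rewrite inE; lia.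
  apply: (card_range (a := n.+1 - R2)) => x; rewrite inE; have := ltn_ord x; lia.
apply: leq_trans (card_bigcup_le _ _) _.
rewrite -sum_nat_const; apply: leq_sum => y yA.
by apply: (card_range (a := y)) => x; rewrite inE; lia.
Qed.

Lemma GS_card n k R Bm :
  #|[set S : {set 'I_n.+1} | (#|S| <= Bm) && (#|nonan S R| <= k)]|
    <= n.+2 ^ k * 2 ^ (k.+2 * (R * Bm).+1).
Proof.
set G := [set S : {set 'I_n.+1} | _].
set R2 := R * Bm.
pose g (S : {set 'I_n.+1}) := (nonan S R, S).
have inj : injective g by move=> S1 S2 [].
rewrite -(card_imset G inj).
have sub : g @: G \subset \bigcup_(A in [set A : {set 'I_n.+1} | #|A| <= k])
     [set (A, X) | X in powerset (Wset A R2)].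
  apply/subsetP => p /imsetP [S SG ->]; move: SG; rewrite inE => /andP [h1 h2].
  apply/bigcupP; exists (nonan S R); first by rewrite inE.
  apply/imsetP; exists S => //; rewrite powersetE.
  apply: subset_trans (anchor_chain S R) (Wset_mono _ _).
  by rewrite /R2 leq_mul2l h1 orbT.
apply: leq_trans (subset_leq_card sub) _.
apply: leq_trans (card_bigcup_le _ _) _.
apply: leq_trans (_ : \sum_(A in [set A : {set 'I_n.+1} | #|A| <= k]) 2 ^ (k.+2 * R2.+1) <= _).
  apply: leq_sum => A; rewrite inE => hA.
  apply: leq_trans (leq_imset_card _ _) _.
  rewrite card_powerset leq_exp2l //.
  apply: leq_trans (Wset_card A R2) _.
  have : #|A| * R2.+1 <= k * R2.+1 by rewrite leq_mul2r hA orbT.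
  lia.
rewrite sum_nat_const leq_mul2r; apply/orP; right.
exact: card_small_sets.
Qed.

Lemma GS_mem n (E : ograph n.+1) k M : is_ograph E ->
  sumn (drop k.+1 (block_seq E)) <= M ->
  (#|Sb E| <= k.+1 + k.+2 * M) && (#|nonan (Sb E) (k.+2 * M)| <= k).
Proof.
move=> HE hyp; set S := Sb E.
have MMp : M <= k.+2 * M by rewrite leq_pmull.
have hP1 := P1 hyp.
have hP2 := P2 hyp.
move: (k.+2 * M) MMp hP2 => Mp MMp hP2.
set big := [set B in blocks E | M < #|B|] in hP1.
have S0 : ord0 \in S := Sb0 E.
have blk v : Iv S v \in blocks E by rewrite inE; exact: Iv_block.
have vin v : v \in Iv S v by rewrite inE sameI_refl.
clearbody S.
pose Vs := [set v | #|Iv S v| <= M].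
have hVs : #|Vs| <= Mp.
  have sub : Vs \subset \bigcup_(B | (B \in blocks E) && (#|B| <= M)) B.
    apply/subsetP => v; rewrite inE => hv; apply/bigcupP; exists (Iv S v) => //.
    by rewrite blk hv.
  apply: leq_trans (subset_leq_card sub) _.
  apply: leq_trans (card_bigcup_le _ _) _.
  exact: leq_trans hP2 _.
have Iv_inj : {in S &, injective (Iv S)}.
  move=> s1 s2 h1 h2 e.
  have : s1 \in Iv S s2 by rewrite -e vin.
  rewrite inE => s21.
  case: (ltngtP s1 s2) => h.
  - by exfalso; apply: (sameI_nS (_ : sameI S s1 s2) h2 h) => //; rewrite sameI_sym.
  - by exfalso; apply: (sameI_nS s21 h1 h).
  - exact: ord_inj.
apply/andP; split.
  have sub : S \subset [set s in S | M < #|Iv S s|] :|: Vs.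
    apply/subsetP => s sS; rewrite !inE sS /=; case: (ltnP M #|Iv S s|) => //.
  apply: leq_trans (subset_leq_card sub) _.
  apply: leq_trans (leq_cardsU _ _) _; apply: leq_add => //.
  rewrite -(card_in_imset (f := Iv S)); last first.
    by move=> x y; rewrite !inE => /andP [xS _] /andP [yS _]; apply: Iv_inj.
  apply: leq_trans hP1; apply: subset_leq_card; apply/subsetP => B /imsetP [s].
  rewrite inE => /andP [sS hs] ->; rewrite /big in_set blk; exact: hs.
set A := nonan S Mp.
have Aprop s : s \in A -> [/\ s \in S, Mp < s, s + Mp < n.+1 &
     forall s', s' \in S -> s' < s -> s' + Mp < s].
  rewrite inE /anch negb_or negb_or => /andP [sS /andP [/andP [h1 h2]]].
  rewrite negb_exists_in => /forall_inP h3; split => //; try lia.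
  move=> s' s'S h; have := h3 s' s'S; rewrite negb_and h /=; lia.
pose p (s : 'I_n.+1) : 'I_n.+1 := inord s.-1.
have vp (s : 'I_n.+1) : (s : nat) > 0 -> (p s : nat) = s.-1.
  by move=> h; rewrite /p inordK //; have := ltn_ord s; lia.
pose f s := Iv S (p s).
have fbig (s : 'I_n.+1) : s \in A -> f s \in big.
  move=> /Aprop [sS h1 h2 h3]; rewrite inE blk /=.
  have [rS_ rle sr] := rS_spec (p s) S0.
  have hps := vp s (leq_ltn_trans (leq0n _) h1).
  have := card_range_ge (A := f s) (a := rS S (p s)) (b := p s) (ltn_ord (p s)).
  have hr := h3 _ rS_ (_ : rS S (p s) < s).
  move=> H; apply: leq_trans (H _); first by (have := hr; last lia; lia).
  move=> i /andP [i1 i2]; rewrite inE.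
  have hi : (inord i : 'I_n.+1) = i :> nat by rewrite inordK //; have := ltn_ord (p s); lia.
  have : sameI S (rS S (p s)) (inord i) by apply: sameI_between sr _ _; lia.
  by apply: sameI_trans; rewrite sameI_sym.
have finj : {in A &, injective f}.
  move=> s1 s2 /Aprop [h1S a1 _ _] /Aprop [h2S a2 _ _] e.
  have v1 := vp s1 (leq_ltn_trans (leq0n _) a1).
  have v2 := vp s2 (leq_ltn_trans (leq0n _) a2).
  have : p s1 \in f s2 by rewrite -e vin.
  rewrite inE => s21.
  case: (ltngtP s1 s2) => h.
  - exfalso; apply: (sameI_nS (_ : sameI S (p s1) (p s2)) h1S); try lia.
    by rewrite sameI_sym.
  - by exfalso; apply: (sameI_nS s21 h2S); lia.
  - exact: ord_inj.
case: (set_0Vmem A) => [->|[s0 s0A]]; first by rewrite cards0.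
set ss := [arg max_(s > s0 in A) (s : nat)].
have [sA smax] : ss \in A /\ forall s, s \in A -> s <= ss.
  by rewrite /ss; case: arg_maxnP => // i iA H; split => // s sA; exact: H.
have [ssS ss1 ss2 _] := Aprop ss sA.
case: (boolP [exists v : 'I_n.+1, (ss <= v) && (M < #|Iv S v|)]) =>
    [/existsP [v /andP [hv1 hv2]] | hno].
  have fsub : f @: A \subset big :\ Iv S v.
    apply/subsetP => B /imsetP [s sA' ->]; rewrite in_setD1 fbig // andbT.
    apply/eqP => e.
    have : v \in f s by rewrite e vin.
    rewrite inE => spv.
    have [sS sp _ _] := Aprop s sA'.
    have hs := smax s sA'.
    have := vp s (leq_ltn_trans (leq0n _) sp) => hps.
    by apply: (sameI_nS spv sS); lia.
  rewrite -(card_in_imset finj); apply: leq_trans (subset_leq_card fsub) _.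
  have vb : Iv S v \in big by rewrite /big in_set blk.
  by move: hP1; rewrite (cardsD1 (Iv S v) big) vb.
exfalso.
have := card_range_ge (A := Vs) (a := ss) (b := n) (leqnn n).
have H : forall i, ss <= i <= n -> (inord i : 'I_n.+1) \in Vs.
  move=> i /andP [i1 i2]; rewrite inE.
  move/existsPn: hno => /(_ (inord i)); rewrite inordK //; last lia.
move=> /(_ H) h; move: #|Vs| h hVs => c h hV; lia.
Qed.

Lemma expn_mono a b k : a <= b -> a ^ k <= b ^ k.
Proof. move=> h; elim: k => // k IH; rewrite !expnS; exact: leq_mul. Qed.

Lemma Kset_card n (S : {set 'I_n.+1}) : #|Kset S| <= 2 * #|S|.
Proof.
apply: leq_trans (leq_cardsU _ _) _.
by rewrite mul2n -addnn leq_add2l; exact: leq_imset_card.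
Qed.

Unset Implicit Arguments.

Theorem lemma8 (P : forall n, pred (ograph n)) (k M : nat) :
  hereditary P ->
  (forall n (E : ograph n), is_ograph E -> P n E ->
     (sumn (drop k.+1 (block_seq E)) <= M)%N) ->
  exists C N : nat, forall n : nat, (N <= n)%N -> (#|Pn P n| <= C * n ^ k)%N.
Proof.
move=> _ hyp.
pose Mp := k.+2 * M.
pose Bm := k.+1 + Mp.
pose c1 := 2 ^ (2 ^ (2 * Bm)).
pose c2 := 2 ^ (k.+2 * (Mp * Bm).+1).
exists (2 ^ k * c2 * c1), 1 => [[|n]] // _.
set GS := [set S : {set 'I_n.+1} | (#|S| <= Bm) && (#|nonan S Mp| <= k)].
have hGS : #|GS| <= n.+2 ^ k * c2 by exact: GS_card.
pose F (E : ograph n.+1) := (Sb E, E :&: powerset (Kset (Sb E))).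
have Finj : {in Pn P n.+1 &, injective F}.
  move=> E1 E2; rewrite !inE => /andP [h1 _] /andP [h2 _] [e1 e2].
  by apply: E_inj => //; rewrite e1.
rewrite -(card_in_imset Finj).
have sub : F @: Pn P n.+1 \subset \bigcup_(S in GS)
    [set (S, X) | X in powerset (powerset (Kset S))].
  apply/subsetP => p /imsetP [E]; rewrite inE => /andP [hE pE] ->.
  apply/bigcupP; exists (Sb E).
    by rewrite inE; exact: GS_mem (hyp _ _ hE pE).
  apply/imsetP; exists (E :&: powerset (Kset (Sb E))) => //.
  by rewrite powersetE subsetIr.
apply: leq_trans (subset_leq_card sub) _.
apply: leq_trans (card_bigcup_le _ _) _.
apply: leq_trans (_ : \sum_(S in GS) c1 <= _).
  apply: leq_sum => S; rewrite inE => /andP [hS _].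
  apply: leq_trans (leq_imset_card _ _) _.
  rewrite !card_powerset leq_exp2l // leq_exp2l //.
  apply: leq_trans (Kset_card S) _; lia.
rewrite sum_nat_const.
apply: leq_trans (_ : n.+2 ^ k * c2 * c1 <= _).
  by rewrite leq_mul2r hGS orbT.
have : n.+2 ^ k <= 2 ^ k * n.+1 ^ k by rewrite -expnMn; apply: expn_mono; lia.
move=> h; clear hGS sub Finj; move: (n.+2 ^ k) (n.+1 ^ k) (2 ^ k) c1 c2 h => a b d e f h.
have -> : d * f * e * b = d * b * f * e by rewrite -!mulnA; congr (d * _); rewrite [e * b]mulnC mulnCA.
by rewrite !leq_mul2r h !orbT.
Qed.
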